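(* Let $\lambda\in\mathbb{R}$, $\alpha=1-\lambda$, and let $\mathcal{Q}_\lambda$ be the $\lambda$-exponential family with sufficient statistic $T$ and base measure $m$. Assume that $\alpha>0$ and that $\varphi_\lambda$ is proper. Let $\vartheta\in\operatorname{dom}\varphi_\lambda$ and $p\in\mathcal{P}(\mathcal{X},m)$. If $p$ is $q_\vartheta$-compatible, then $c_\lambda\big(\vartheta,\,p^{(\alpha)}_{|S_\vartheta}(T)\big)\in\mathbb{R}$.
   Context: $\mathcal{H}$ is a finite-dimensional real Hilbert space with inner product $\langle\cdot,\cdot\rangle$; $\mathcal{X}$ is a measurable space (Borel $\sigma$-algebra) with a measure $m$; $\mathcal{P}(\mathcal{X},m)$ is the set of probability distributions having a density with respect to $m$ (identified with their densities). For a density $p$ and measurable $f$ (possibly $\mathcal H$-valued), $p(f)=\int f(x)p(x)\,m(dx)$. Conventions: $\log s=-\infty$ for $s\le 0$ and $\exp(-\infty)=0$. The coupling is $c_\lambda(u,v)=\frac1\lambda\log(1+\lambda\langle u,v\rangle)$ for $\lambda\neq0$ and $c_0(u,v)=\langle u,v\rangle$. Given a measurable $T:\mathcal X\to\mathcal H$, the $\lambda$-log-partition function is $\varphi_\lambda(\vartheta)=\log\int\exp(c_\lambda(\vartheta,T(x)))\,m(dx)$, $\operatorname{dom}\varphi_\lambda=\{\vartheta\in\mathcal H:\varphi_\lambda(\vartheta)<+\infty\}$, and for $\vartheta\in\operatorname{dom}\varphi_\lambda$, $q_\vartheta(x)=\exp(c_\lambda(\vartheta,T(x))-\varphi_\lambda(\vartheta))$;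 $\mathcal Q_\lambda=\{q_\vartheta:\vartheta\in\operatorname{dom}\varphi_\lambda\}$. $\varphi_\lambda$ proper means it never takes the value $-\infty$ and $\operatorname{dom}\varphi_\lambda\neq\emptyset$. The support of $q_\vartheta$ is $S_\vartheta=\{x\in\mathcal X:1+\lambda\langle\vartheta,T(x)\rangle>0\}$ (equal to $\mathcal X$ when $\lambda=0$). For $Y\subset\mathcal X$, $p_{|Y}=p\,\mathbf 1_Y$ is the restriction of $p$ to $Y$. For $\alpha>0$ the escort of a nonnegative function $p$ is $p^{(\alpha)}=p^\alpha/\int p^\alpha\,dm$ (when the normalizing constant is finite and positive), and $p^{(\alpha)}_{|Y}$ denotes the escort of $p_{|Y}$. A density $p$ is $q_\vartheta$-compatible if $\int p_{|S_\vartheta}(x)^\alpha m(dx)\in(0,+\infty)$ and $\int T(x)p_{|S_\vartheta}(x)^\alpha m(dx)$ has finite components. *)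

(* Defs.v *)
From HB Require Import structures.
From mathcomp Require Import all_boot all_order all_algebra.
From mathcomp Require Import all_classical all_reals all_analysis.
Set Implicit Arguments. Unset Strict Implicit. Unset Printing Implicit Defensive.
Import Order.TTheory GRing.Theory Num.Theory.
Local Open Scope ring_scope.
Local Open Scope classical_set_scope.

(* H is modelled as R^n ('rV[R]_n) with the standard inner product. *)
Definition inner (R : realType) (n : nat) (u v : 'rV[R]_n) : R :=
  \sum_(i < n) u 0 i * v 0 i.

Definition clam (R : realType) (n : nat) (lam : R) (u v : 'rV[R]_n) : \bar R :=
  if lam == 0 then (inner u v)%:E
  else if 0 < 1 + lam * inner u v then (ln (1 + lam * inner u v) / lam)%:E
  else -oo%E.

Definition phil (R : realType) (d : measure_display) (X : measurableType d)
  (m : {measure set X -> \bar R}) (n : nat) (T : X -> 'rV[R]_n) (lam : R)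
  (th : 'rV[R]_n) : \bar R :=
  lne (\int[m]_x expeR (clam lam th (T x)))%E.

Definition dom_phil (R : realType) (d : measure_display) (X : measurableType d)
  (m : {measure set X -> \bar R}) (n : nat) (T : X -> 'rV[R]_n) (lam : R)
  : set 'rV[R]_n := [set th | (phil m T lam th < +oo)%E].

Definition proper_phil (R : realType) (d : measure_display) (X : measurableType d)
  (m : {measure set X -> \bar R}) (n : nat) (T : X -> 'rV[R]_n) (lam : R) : Prop :=
  (forall th, phil m T lam th != -oo%E) /\ exists th, th \in dom_phil m T lam.

Definition supp (R : realType) (d : measure_display) (X : measurableType d)
  (n : nat) (T : X -> 'rV[R]_n) (lam : R) (th : 'rV[R]_n) : set X :=
  [set x | 0 < 1 + lam * inner th (T x)].

Definition is_density (R : realType) (d : measure_display) (X : measurableType d)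
  (m : {measure set X -> \bar R}) (p : X -> R) : Prop :=
  [/\ measurable_fun setT p, (forall x, 0 <= p x) & (\int[m]_x (p x)%:E = 1)%E].

Definition restr (R : realType) (d : measure_display) (X : measurableType d)
  (p : X -> R) (Y : set X) : X -> R := fun x => (\1_Y x : R) * p x.

Definition compatible (R : realType) (d : measure_display) (X : measurableType d)
  (m : {measure set X -> \bar R}) (n : nat) (T : X -> 'rV[R]_n) (lam : R)
  (th : 'rV[R]_n) (p : X -> R) : Prop :=
  let alpha := 1 - lam in
  let pS := restr p (supp T lam th) in
  (0 < \int[m]_x ((pS x) `^ alpha)%:E < +oo)%E /\
  forall i : 'I_n, (\int[m]_x (T x 0 i * (pS x) `^ alpha)%:E)%E \is a fin_num.

Definition escort (R : realType) (d : measure_display) (X : measurableType d)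
  (m : {measure set X -> \bar R}) (alpha : R) (p : X -> R) : X -> R :=
  fun x => (p x) `^ alpha / fine (\int[m]_y ((p y) `^ alpha)%:E)%E.

Definition expect (R : realType) (d : measure_display) (X : measurableType d)
  (m : {measure set X -> \bar R}) (n : nat) (T : X -> 'rV[R]_n) (q : X -> R)
  : 'rV[R]_n := \row_i fine (\int[m]_x (T x 0 i * q x)%:E)%E.

(* Main.v *)
Require Import Defs.
From HB Require Import structures.
From mathcomp Require Import all_boot all_order all_algebra.
From mathcomp Require Import all_classical all_reals all_analysis.
From mathcomp Require Import measurable_realfun.
Import Order.TTheory GRing.Theory Num.Theory.
Local Open Scope ring_scope.
Local Open Scope classical_set_scope.

Theorem lemma1 (R : realType) (d : measure_display) (X : measurableType d)
  (m : {measure set X -> \bar R}) (n : nat) (T : X -> 'rV[R]_n)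
  (lam : R) (th : 'rV[R]_n) (p : X -> R) :
  (forall i : 'I_n, measurable_fun setT (fun x => T x 0 i)) ->
  0 < 1 - lam ->
  proper_phil m T lam ->
  th \in dom_phil m T lam ->
  is_density m p ->
  compatible m T lam th p ->
  clam lam th (expect m T (escort m (1 - lam) (restr p (supp T lam th))))
    \is a fin_num.
Proof.
move=> mT a0 _ _ [mp p0 _] [/andP[Zgt0 Zlt] cfin].
rewrite /clam; case: ifP => // lam0.
case: ifP => // Hneg; exfalso; move/negbT: Hneg; apply/negP; rewrite negbK.
set a := 1 - lam in a0 Zgt0 Zlt cfin *.
set S := supp T lam th in Zgt0 Zlt cfin *.
set pS := restr p S in Zgt0 Zlt cfin *.
set q := fun x => pS x `^ a.
have mf : measurable_fun setT (fun x => 1 + lam * inner th (T x)).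
  apply: measurable_realfun.measurable_funD; first exact: measurable_cst.
  apply: measurable_realfun.measurable_funM; first exact: measurable_cst.
  by apply: measurable_sum => i; apply: measurable_realfun.measurable_funM => //; exact: measurable_cst.
have mS : measurable S.
  have := mf measurableT `]0%R, +oo[%classic (measurable_itv _).
  rewrite setTI; congr measurable; apply/seteqP; split => x /=;
    by rewrite /S /supp /= in_itv /= andbT.
have mpS : measurable_fun setT pS.
  by apply: measurable_realfun.measurable_funM => //; exact: measurable_indic.
have mq : measurable_fun setT q.
  exact: measurableT_comp (measurable_realfun.measurable_powR a) mpS.
have mqE : measurable_fun setT (fun x => (q x)%:E) by apply/measurable_realfun.measurable_EFinP.
have mTq : forall i : 'I_n, measurable_fun setT (fun x => T x 0 i * q x).
  by move=> i; apply: measurable_realfun.measurable_funM.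
have intT : forall i : 'I_n, m.-integrable setT (fun x => (T x 0 i * q x)%:E).
  move=> i; apply/integrableP; split; first exact/measurable_realfun.measurable_EFinP.
  by rewrite integral_fin_num_abs //; exact: cfin.
have Zfin : (\int[m]_x (q x)%:E)%E \is a fin_num.
  by rewrite ge0_fin_numE // integral_ge0 // => x _; rewrite lee_fin powR_ge0.
have intq : m.-integrable setT (fun x => (q x)%:E).
  apply/integrableP; split => //.
  by rewrite integral_fin_num_abs.
set Z := fine (\int[m]_x (q x)%:E)%E.
have Zpos : 0 < Z by rewrite /Z fine_gt0 // Zgt0 Zlt.
set c := fun i : 'I_n => fine (\int[m]_x (T x 0 i * q x)%:E)%E.
have Hexp : forall i, expect m T (escort m a pS) 0 i = c i / Z.
  move=> i; rewrite mxE.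
  rewrite (_ : (\int[m]_x (T x 0 i * escort m a pS x)%:E)%E =
     ((\int[m]_x (T x 0 i * q x)%:E) * (Z^-1)%:E)%E); last first.
    rewrite -integralZr //; apply: eq_integral => x _.
    by rewrite -EFinM /escort mulrA.
  by rewrite -[X in (X * _)%E](fineK (cfin i)) -EFinM.
have K : (\int[m]_x ((1 + lam * inner th (T x)) * q x)%:E)%E =
         (Z + lam * \sum_(i < n) th 0 i * c i)%:E.
  rewrite (eq_integral (fun x => (q x)%:E +
     \sum_(i < n) (lam * th 0 i)%:E * (T x 0 i * q x)%:E)%E); last first.
    move=> x _; rewrite sumEFin -EFinD; congr EFin.
    rewrite mulrDl mul1r; congr (_ + _).
    rewrite /inner mulr_sumr mulr_suml; apply: eq_bigr => i _.
    by rewrite !mulrA.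
  have isum : m.-integrable setT
      (fun x => \sum_(i < n) ((lam * th 0 i)%:E * (T x 0 i * q x)%:E)%E).
    by apply: (integrable_sum measurableT) => i _; exact: (integrableZl measurableT).
  rewrite (@integralD _ _ _ m setT measurableT (fun x => (q x)%:E)
     (fun x => \sum_(i < n) ((lam * th 0 i)%:E * (T x 0 i * q x)%:E)%E) intq isum).
  rewrite (integral_sum measurableT (f := fun i x => ((lam * th 0 i)%:E * (T x 0 i * q x)%:E)%E)); last first.
    by move=> i; exact: (integrableZl measurableT).
  under eq_bigr do rewrite (integralZl measurableT (intT _)).
  rewrite -/Z -(fineK Zfin) -/Z.
  under eq_bigr do rewrite -(fineK (cfin _)) -EFinM.
  rewrite sumEFin -EFinD; congr EFin; congr (_ + _).
  rewrite mulr_sumr; apply: eq_bigr => i _; by rewrite /c mulrA.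
have Kpos : 0 < Z + lam * \sum_(i < n) th 0 i * c i.
  set g := fun x => (1 + lam * inner th (T x)) * q x.
  have qS : forall x, ~ S x -> q x = 0.
    move=> x nSx; rewrite /q /pS /restr indicE memNset // mul0r powR0 //.
    by rewrite gt_eqF.
  have gpos : forall x, 0 <= g x.
    move=> x; rewrite /g; have [Sx|nSx] := pselect (S x).
      by rewrite mulr_ge0 ?powR_ge0 // ltW.
    by rewrite qS // mulr0.
  have g0 : forall x, g x = 0 -> q x = 0.
    move=> x; rewrite /g; have [Sx|nSx] := pselect (S x); last by move=> _; exact: qS.
    by move/eqP; rewrite mulf_eq0 gt_eqF //= => /eqP.
  have mg : measurable_fun setT (fun x => (g x)%:E).
    by apply/measurable_EFinP; apply: measurable_funM.
  rewrite ltNge; apply/negP => Hle.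
  have I0 : (\int[m]_x (g x)%:E)%E = 0%E.
    apply/eqP; rewrite eq_le; apply/andP; split.
      by rewrite /g K lee_fin.
    by apply: integral_ge0 => x _; rewrite lee_fin.
  have : (\int[m]_x `|(g x)%:E|)%E = 0%E.
    by rewrite -I0; apply: eq_integral => x _; rewrite gee0_abs // lee_fin.
  move/(ae_eq_integral_abs m measurableT mg) => Hae.
  have Hae' : ae_eq m setT (fun x => (q x)%:E) (cst 0%E).
    apply: filterS Hae => x /= H Tx; have := H Tx.
    by case => /g0 ->.
  have := ae_eq_integral (cst 0%E) (fun x => (q x)%:E) measurableT mqE (measurable_cst _) Hae'.
  rewrite integral0 => Hz.
  by move: Zgt0; rewrite -/q Hz ltxx.
rewrite /inner.
rewrite (eq_bigr (fun i => th 0 i * c i / Z)); last first.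
  by move=> i _; rewrite Hexp mulrA.
rewrite -mulr_suml.
have -> : 1 + lam * ((\sum_(i < n) th 0 i * c i) / Z) =
   (Z + lam * \sum_(i < n) th 0 i * c i) / Z.
  by rewrite mulrDl divff ?gt_eqF // mulrA.
by rewrite divr_gt0.
Qed.
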